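(* Let $(\mathcal{H},\langle\cdot,\cdot\rangle)$ be a real Hilbert space with induced norm $\|\cdot\|$. Let $f:\mathcal{H}\to\mathbb{R}$ be $\mu$-strongly convex and $L$-smooth with $0<\mu<L<+\infty$, and let $g:\mathcal{H}\to\mathbb{R}\cup\{+\infty\}$ be convex, proper and lower semicontinuous. Let $q=\mu/L$ and let $((x^k,y^k,z^k))_{k\in\mathbb{N}_0}$ be generated by the Prox-TMM method (described in the context) from an arbitrary $x^0\in\mathcal{H}$, and let $x^\star$ be the unique minimizer of $f+g$. Then $\|z^k-x^\star\|\in\mathcal{O}\big((1-\sqrt q)^k\big)$ as $k\to\infty$.
   Context: $f$ is $L$-smooth if Fréchet differentiable with $L$-Lipschitz gradient; $\mu$-strongly convex means $f-\frac{\mu}{2}\|\cdot\|^2$ is convex. For $\gamma>0$, $\operatorname{Prox}^{\gamma}_g(x)=\operatorname{argmin}_z\big(g(z)+\frac{1}{2\gamma}\|x-z\|^2\big)$. The Prox-TMM method: $q=\mu/L$, $z^0=x^0$, and for $k=0,1,2,\dots$: $y^k=\frac{2\sqrt q}{1+\sqrt q}z^k+\frac{1-\sqrt q}{1+\sqrt q}x^k$, $\bar z^{k+1}=(1-\sqrt q)z^k+\sqrt q\,y^k-\frac{1}{\sqrt q L}\nabla f(y^k)$, $z^{k+1}=\operatorname{Prox}^{1/(\sqrt q L)}_g(\bar z^{k+1})$, $x^{k+1}=y^k-\frac1L\nabla f(y^k)-\sqrt q(\bar z^{k+1}-z^{k+1})$. *)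

(* Defs.v *)
From HB Require Import structures.
From mathcomp Require Import all_boot all_order all_algebra.
From mathcomp Require Import all_classical all_reals all_analysis.
Set Implicit Arguments. Unset Strict Implicit. Unset Printing Implicit Defensive.
Import Order.TTheory GRing.Theory Num.Theory.
Import numFieldNormedType.Exports.
Local Open Scope classical_set_scope.
Local Open Scope ring_scope.

Definition is_inner_product (R : realType) (V : completeNormedModType R)
  (ip : V -> V -> R) : Prop :=
  [/\ forall x y, ip x y = ip y x,
      forall a x y z, ip (a *: x + y) z = a * ip x z + ip y z &
      forall x, `|x| ^+ 2 = ip x x].

Definition is_gradient (R : realType) (V : completeNormedModType R)
  (ip : V -> V -> R) (f : V -> R) (grad : V -> V) : Prop :=
  forall x, (fun h : V => `|f (x + h) - f x - ip (grad x) h| / `|h|) @ 0^'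
            --> (0 : R).

Definition L_smooth (R : realType) (V : completeNormedModType R)
  (ip : V -> V -> R) (L : R) (f : V -> R) (grad : V -> V) : Prop :=
  is_gradient ip f grad /\ forall x y, `|grad x - grad y| <= L * `|x - y|.

Definition convex_fun (R : realType) (V : completeNormedModType R)
  (h : V -> R) : Prop :=
  forall (x y : V) (t : R), 0 <= t <= 1 ->
    h (t *: x + (1 - t) *: y) <= t * h x + (1 - t) * h y.

Definition strongly_convex (R : realType) (V : completeNormedModType R)
  (mu : R) (f : V -> R) : Prop :=
  convex_fun (fun x => f x - mu / 2 * `|x| ^+ 2).

Definition convex_efun (R : realType) (V : completeNormedModType R)
  (g : V -> \bar R) : Prop :=
  forall (x y : V) (t : R), 0 <= t <= 1 ->
    (g (t *: x + (1 - t) *: y)%R <= t%:E * g x + (1 - t)%:E * g y)%E.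

Definition proper_efun (R : realType) (V : completeNormedModType R)
  (g : V -> \bar R) : Prop :=
  (exists x, g x < +oo)%E /\ (forall x, g x != -oo)%E.

Definition is_prox (R : realType) (V : completeNormedModType R)
  (g : V -> \bar R) (gamma : R) (x p : V) : Prop :=
  forall w : V,
    (g p + ((2 * gamma)^-1 * `|x - p| ^+ 2)%:E
     <= g w + ((2 * gamma)^-1 * `|x - w| ^+ 2)%:E)%E.

Definition is_minimizer (R : realType) (V : completeNormedModType R)
  (f : V -> R) (g : V -> \bar R) (xs : V) : Prop :=
  forall w : V, ((f xs)%:E + g xs <= (f w)%:E + g w)%E.

Definition prox_TMM (R : realType) (V : completeNormedModType R)
  (mu L : R) (grad : V -> V) (g : V -> \bar R)
  (x y z zbar : nat -> V) : Prop :=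
  let q := mu / L in
  z 0%N = x 0%N /\
  forall k : nat,
  [/\ y k = (2 * Num.sqrt q / (1 + Num.sqrt q)) *: z k
            + ((1 - Num.sqrt q) / (1 + Num.sqrt q)) *: x k,
      zbar k.+1 = (1 - Num.sqrt q) *: z k + Num.sqrt q *: y k
                  - (Num.sqrt q * L)^-1 *: grad (y k),
      is_prox g (Num.sqrt q * L)^-1 (zbar k.+1) (z k.+1) &
      x k.+1 = y k - L^-1 *: grad (y k) - Num.sqrt q *: (zbar k.+1 - z k.+1)].

(* Main.v *)
Require Import Defs.
From HB Require Import structures.
From mathcomp Require Import all_boot all_order all_algebra.
From mathcomp Require Import all_classical all_reals all_analysis.
From mathcomp Require Import ring lra.
Set Implicit Arguments. Unset Strict Implicit. Unset Printing Implicit Defensive.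
Import Order.TTheory GRing.Theory Num.Theory.
Import numFieldNormedType.Exports.
Local Open Scope classical_set_scope.
Local Open Scope ring_scope.
Section IP.
Variables (R : realType) (V : completeNormedModType R) (ip : V -> V -> R).
Hypothesis hip : is_inner_product ip.

Lemma ipC x y : ip x y = ip y x. Proof. by case: hip. Qed.
Lemma ipDl x y z : ip (x + y) z = ip x z + ip y z.
Proof. case: hip => _ h _; have := h 1 x y z; by rewrite scale1r mul1r. Qed.
Lemma ipZl a x z : ip (a *: x) z = a * ip x z.
Proof.
have h0 : ip 0 z = 0.
  case: hip => _ h _; have := h 1 0 0 z; rewrite scaler0 addr0 mul1r => h1; lra.
case: hip => _ h _; have := h a x 0 z; by rewrite addr0 h0 addr0. Qed.
Lemma ip0l z : ip 0 z = 0.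
Proof. by rewrite -(scale0r (0:V)) ipZl mul0r. Qed.
Lemma ipNl x z : ip (- x) z = - ip x z.
Proof. by rewrite -scaleN1r ipZl mulN1r. Qed.
Lemma ipBl x y z : ip (x - y) z = ip x z - ip y z.
Proof. by rewrite ipDl ipNl. Qed.
Lemma ipDr x y z : ip z (x + y) = ip z x + ip z y.
Proof. by rewrite ipC ipDl !(ipC z). Qed.
Lemma ipZr a x z : ip z (a *: x) = a * ip z x.
Proof. by rewrite ipC ipZl ipC. Qed.
Lemma ipNr x z : ip z (- x) = - ip z x.
Proof. by rewrite ipC ipNl ipC. Qed.
Lemma ipBr x y z : ip z (x - y) = ip z x - ip z y.
Proof. by rewrite ipDr ipNr. Qed.
Lemma ip0r z : ip z 0 = 0.
Proof. by rewrite ipC ip0l. Qed.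
Lemma nip x : `|x| ^+ 2 = ip x x.
Proof. by case: hip. Qed.
Lemma ipxx_ge0 x : 0 <= ip x x.
Proof. by rewrite -nip sqr_ge0. Qed.
End IP.
Section Grad.
Variables (R : realType) (V : completeNormedModType R) (ip : V -> V -> R).
Lemma grad_small (f : V -> R) grad (Hg : is_gradient ip f grad) b (eps : R) :
  0 < eps -> exists2 del, 0 < del & forall h, h != 0 -> `|h| < del ->
    `|f (b + h) - f b - ip (grad b) h| <= eps * `|h|.
Proof.
move=> e0; have /cvgrPdist_lt /(_ eps e0) := Hg b.
move=> /nbhs_ballP [del d0 hd]; exists del => // h h0 hlt.
have : ball (0:V) del h by rewrite -ball_normE /ball_ /= sub0r normrN.
have hn : 0 < `|h| by rewrite normr_gt0.
move=> /hd /(_ h0) /=; rewrite ?sub0r ?normrN normrM normrV ?unitfE ?normr_eq0 //.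
by rewrite normr_id ltr_pdivrMr ?normr_id // => /ltW.
Qed.
End Grad.
Lemma ge0_eps (R : realType) (X K : R) : 0 <= K ->
  (forall eps, 0 < eps -> - (eps * K) <= X) -> 0 <= X.
Proof.
move=> K0 H; rewrite leNgt; apply/negP => X0.
have e0 : 0 < - X / (K + 1) by rewrite divr_gt0 // ?oppr_gt0 // ltr_wpDl.
have := H _ e0; rewrite mulrAC -mulNr ler_pdivrMr ?ltr_wpDl //.
move=> h; nra.
Qed.

Section SC.
Variables (R : realType) (V : completeNormedModType R) (ip : V -> V -> R).
Hypothesis hip : is_inner_product ip.

Lemma normsq_comb (t : R) (a b : V) :
  `|t *: a + (1 - t) *: b| ^+ 2 =
  t * `|a| ^+ 2 + (1 - t) * `|b| ^+ 2 - t * (1 - t) * `|a - b| ^+ 2.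
Proof.
rewrite !(nip hip) !(ipDl hip, ipDr hip, ipZl hip, ipZr hip, ipBl hip, ipBr hip, ipNl hip, ipNr hip).
rewrite (ipC hip b a); ring.
Qed.

Variables (f : V -> R) (grad : V -> V) (mu : R).
Hypothesis Hg : is_gradient ip f grad.
Hypothesis Hsc : strongly_convex mu f.
Hypothesis mu0 : 0 <= mu.

Lemma sc_lower a b :
  f b + ip (grad b) (a - b) + mu / 2 * `|a - b| ^+ 2 <= f a.
Proof.
set d := a - b.
have hconv t : 0 <= t <= 1 ->
    f (b + t *: d) <= t * f a + (1 - t) * f b - mu / 2 * (t * (1 - t)) * `|d| ^+ 2.
  move=> ht; have := Hsc a b ht.
  have -> : t *: a + (1 - t) *: b = b + t *: d.
    by rewrite /d scalerBl scale1r scalerBr addrCA.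
  rewrite -[b + t *: d](_ : t *: a + (1 - t) *: b = _); last first.
    by rewrite /d scalerBl scale1r scalerBr addrCA.
  rewrite normsq_comb => h.
  set A := `|a| ^+ 2 in h; set B := `|b| ^+ 2 in h; set D := `|a - b| ^+ 2 in h.
  rewrite /d -/D; lra.
have [hab|dn0] := eqVneq d 0.
  move: hab; rewrite /d => /eqP; rewrite subr_eq0 => /eqP ->.
  by rewrite subrr (ip0r hip) normr0 expr0n /= mulr0 !addr0.
have dpos : 0 < `|d| by rewrite normr_gt0.
rewrite -subr_ge0; set X := _ - _.
apply: (@ge0_eps _ X (`|d| + mu / 2 * `|d| ^+ 2)).
  by rewrite addr_ge0 // mulr_ge0 ?divr_ge0 // sqr_ge0.
move=> eps e0.
have [del del0 hdel] := grad_small Hg b e0.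
pose t := Num.min (Num.min 1 eps) (del / (2 * `|d|)).
have t0 : 0 < t by rewrite /t !lt_min ltr01 e0 divr_gt0 // mulr_gt0.
have t1 : t <= 1 by rewrite /t !ge_min lexx.
have te : t <= eps by rewrite /t !ge_min lexx orbT.
have tdel : t * `|d| < del.
  have : t <= del / (2 * `|d|) by rewrite /t ge_min lexx orbT.
  rewrite ler_pdivlMr ?mulr_gt0 // => h; nra.
have htd : t *: d != 0 by rewrite scaler_eq0 negb_or dn0 andbT gt_eqF.
have := hdel _ htd; rewrite normrZ gtr0_norm // => /(_ tdel).
rewrite (ipZr hip) => habs.
have hlow : f b + t * ip (grad b) d - eps * (t * `|d|) <= f (b + t *: d).
  move: habs; rewrite ler_norml => /andP [h1 _]; lra.
have := hconv t; rewrite t1 ltW // => /(_ isT) hc.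
have key : t * (ip (grad b) d - eps * `|d|) <= t * (f a - f b - mu / 2 * (1 - t) * `|d| ^+ 2).
  set G := ip (grad b) d in hlow *; set N := `|d| ^+ 2 in hc *.
  set F := f (b + t *: d) in hlow hc; nra.
rewrite ler_pM2l // in key.
have N0 : 0 <= `|d| ^+ 2 := sqr_ge0 _.
rewrite /X; set G := ip (grad b) d in key *; set N := `|d| ^+ 2 in key N0 *.
have : mu / 2 * t * N <= mu / 2 * eps * N.
  by rewrite ler_wpM2r // ler_wpM2l // divr_ge0.
nra.
Qed.
End SC.
Section UP.
Variables (R : realType) (V : completeNormedModType R) (ip : V -> V -> R).
Hypothesis hip : is_inner_product ip.

Lemma ip_le_lip (u d : V) (K : R) : 0 <= K -> `|u| <= K * `|d| ->
  ip u d <= K * `|d| ^+ 2.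
Proof.
move=> K0 hu.
have h0 : 0 <= ip (u - K *: d) (u - K *: d) := ipxx_ge0 hip _.
move: h0; rewrite !(ipDl hip, ipDr hip, ipZl hip, ipZr hip, ipBl hip, ipBr hip, ipNl hip, ipNr hip).
rewrite -!(nip hip) (ipC hip d u) => h0.
have hu2 : `|u| ^+ 2 <= K ^+ 2 * `|d| ^+ 2.
  by rewrite -exprMn lerXn2r // nnegrE // mulr_ge0.
have [K0'|Kp] := eqVneq K 0.
  move: hu; rewrite K0' mul0r normr_le0 => /eqP ->.
  by rewrite (ip0l hip) mul0r.
have Kpos : 0 < K by rewrite lt_neqAle eq_sym Kp.
have : K * (ip u d) <= K * (K * `|d| ^+ 2) by nra.
by rewrite ler_pM2l.
Qed.

Variables (f : V -> R) (grad : V -> V) (L : R).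
Hypothesis Hlow : forall a b, f b + ip (grad b) (a - b) <= f a.
Hypothesis HL : forall x y, `|grad x - grad y| <= L * `|x - y|.
Hypothesis L0 : 0 <= L.

Lemma smooth_upper a b :
  f a <= f b + ip (grad b) (a - b) + L / 2 * `|a - b| ^+ 2.
Proof.
set d := a - b; set G := ip (grad b) d; set N := `|d| ^+ 2.
have N0 : 0 <= N := sqr_ge0 _.
have step (n : nat) : (0 < n)%N -> forall i : nat,
  f (b + (i%:R / n%:R) *: d) - f b <= i%:R / n%:R * G + L * N * (i%:R * (i%:R + 1)) / (2 * n%:R ^+ 2).
  move=> n0; have np : 0 < n%:R :> R by rewrite ltr0n.
  elim=> [|i IH].
    by rewrite mul0r scale0r addr0 subrr mul0r mul0r mulr0 mul0r addr0.
  set bi := b + (i%:R / n%:R) *: d; set bj := b + (i.+1%:R / n%:R) *: d.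
  have hbj : bj - bi = n%:R^-1 *: d.
    rewrite /bj /bi opprD addrACA subrr add0r -scalerBl -mulrBl.
    by rewrite -natrB // subSnn mul1r.
  have h1 := Hlow bi bj.
  have h2 : ip (grad bj) (bi - bj) = - (n%:R^-1 * G) - n%:R^-1 * ip (grad bj - grad b) d.
    rewrite -opprB hbj (ipNr hip) (ipZr hip) (ipBl hip) /G; ring.
  have h3 : ip (grad bj - grad b) d <= L * (i.+1%:R / n%:R) * N.
    apply: (@ip_le_lip _ _ (L * (i.+1%:R / n%:R))).
      by rewrite mulr_ge0 // divr_ge0.
    apply: (le_trans (HL _ _)).
    rewrite /bj addrAC subrr add0r normrZ ger0_norm ?divr_ge0 //.
    by rewrite mulrA.
  have e1 : i.+1%:R = i%:R + 1 :> R by rewrite -natr1.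
  rewrite -/bi -/bj in IH *.
  rewrite h2 in h1.
  have hinv : n%:R^-1 * (L * (i.+1%:R / n%:R) * N) = L * N * i.+1%:R / n%:R ^+ 2.
    by rewrite expr2 invfM; field; rewrite gt_eqF.
  have h4 : n%:R^-1 * ip (grad bj - grad b) d <= L * N * i.+1%:R / n%:R ^+ 2.
    by rewrite -hinv ler_wpM2l // invr_ge0 ltW.
  have e2 : i.+1%:R / n%:R * G + L * N * (i.+1%:R * (i.+1%:R + 1)) / (2 * n%:R ^+ 2)
     = (i%:R / n%:R * G + L * N * (i%:R * (i%:R + 1)) / (2 * n%:R ^+ 2))
       + n%:R^-1 * G + L * N * i.+1%:R / n%:R ^+ 2.
    rewrite e1; field; by rewrite gt_eqF.
  rewrite e2; lra.
rewrite -subr_ge0; set X := _ - _.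
have key (n : nat) : (0 < n)%N -> - (L * N / (2 * n%:R)) <= X.
  move=> n0; have np : 0 < n%:R :> R by rewrite ltr0n.
  have := step n n0 n; rewrite divff ?gt_eqF // mul1r.
  have -> : b + 1 *: d = a by rewrite scale1r /d addrC subrK.
  have -> : L * N * (n%:R * (n%:R + 1)) / (2 * n%:R ^+ 2) = L * N / 2 + L * N / (2 * n%:R).
    by field; rewrite gt_eqF.
  rewrite /X -/d -/G -/N; lra.
apply: (@ge0_eps _ X (L * N / 2)).
  by rewrite divr_ge0 // mulr_ge0.
move=> eps e0.
have ei : 0 <= eps^-1 by rewrite invr_ge0 ltW.
have hn := archi_boundP ei.
set n := Num.Def.archi_bound _ in hn.
have np : 0 < n%:R :> R := le_lt_trans ei hn.
have n0 : (0 < n)%N by rewrite -(ltr0n R).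
apply: le_trans (key n n0).
rewrite lerN2.
have h1 : 1 < eps * n%:R.
  have hh : eps * eps^-1 = 1 by rewrite mulfV ?gt_eqF.
  nra.
have LN : 0 <= L * N / 2 by rewrite divr_ge0 // mulr_ge0.
have -> : L * N / (2 * n%:R) = (L * N / 2) / n%:R by rewrite invfM mulrA.
rewrite ler_pdivrMr //; nra.
Qed.
End UP.
Section Interp.
Variables (R : realType) (V : completeNormedModType R) (ip : V -> V -> R).
Hypothesis hip : is_inner_product ip.
Variables (f : V -> R) (grad : V -> V) (mu L : R).
Hypothesis Hlowmu : forall a b, f b + ip (grad b) (a - b) + mu / 2 * `|a - b| ^+ 2 <= f a.
Hypothesis Hup : forall a b, f a <= f b + ip (grad b) (a - b) + L / 2 * `|a - b| ^+ 2.
Hypothesis muL : mu < L.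

Lemma interp a b :
  f b + ip (grad b) (a - b)
  + (2 * (L - mu))^-1 * `|grad a - grad b - mu *: (a - b)| ^+ 2
  + mu / 2 * `|a - b| ^+ 2 <= f a.
Proof.
have Lm : L - mu != 0 by rewrite subr_eq0 gt_eqF.
set D := a - b; set GD := grad a - grad b; set Dl := GD - mu *: D.
set w := a - (L - mu)^-1 *: Dl.
have h1 := Hlowmu w b; have h2 := Hup w a.
have ew1 : w - b = D - (L - mu)^-1 *: Dl by rewrite /w /D addrAC.
have ew2 : w - a = - ((L - mu)^-1 *: Dl) by rewrite /w addrAC subrr add0r.
have ga : grad a = grad b + GD by rewrite /GD addrC subrK.
rewrite ew1 in h1; rewrite ew2 ga in h2.
clearbody w D GD.
rewrite /Dl in h1 h2 *.
rewrite !(nip hip) in h1 h2 *.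
rewrite !(ipDl hip, ipDr hip, ipZl hip, ipZr hip, ipBl hip, ipBr hip, ipNl hip, ipNr hip) in h1 h2 *.
rewrite ?(ipC hip GD D) ?(ipC hip GD (grad b)) ?(ipC hip D (grad b)) in h1 h2 *.
rewrite -subr_ge0 in h1; rewrite -subr_ge0 in h2.
rewrite -subr_ge0.
apply: (le_trans (addr_ge0 h1 h2)); rewrite le_eqVlt; apply/orP; left; apply/eqP.
by field.
Qed.
End Interp.
Section Prox.
Variables (R : realType) (V : completeNormedModType R) (ip : V -> V -> R).
Hypothesis hip : is_inner_product ip.
Variable g : V -> \bar R.
Hypothesis Hcv : convex_efun g.
Hypothesis Hpr : proper_efun g.

Lemma fin_of_le (e : \bar R) (r : R) : (e != -oo)%E -> (e <= r%:E)%E ->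
  exists r', e = r'%:E.
Proof. by case: e => [r'| |] //= _ _; exists r'. Qed.

Lemma comb_sub (t : R) (w p zb : V) :
  zb - (t *: w + (1 - t) *: p) = (zb - p) - t *: (w - p).
Proof.
rewrite scalerBl scale1r scalerBr !opprD !opprK.
by rewrite [- (t *: w) + _]addrCA [zb + _]addrA.
Qed.

Lemma comb_sub2 (t : R) (w p : V) :
  (t *: w + (1 - t) *: p) - p = t *: (w - p).
Proof. by rewrite scalerBl scale1r scalerBr addrCA addrAC subrr add0r. Qed.

Lemma prox_subgrad gam zb p : 0 < gam -> is_prox g gam zb p ->
  exists gp : R, g p = gp%:E /\
    forall w, ((gp + gam^-1 * ip (zb - p) (w - p))%:E <= g w)%E.
Proof.
move=> gam0 hp.
case: Hpr => [[w0 hw0] hninf].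
have [gp hgp] : exists gp, g p = gp%:E.
  have h1 := hp w0; have h2 := hninf p.
  move: h1 h2; case: (g p) => [r| |] // h1 _; first by exists r.
  by exfalso; move: h1 hw0; case: (g w0) => [r0| |] //=.
exists gp; split => // w.
move gwE : (g w) => [gw| |]; last by have := hninf w; rewrite gwE.
  2: by rewrite leey.
rewrite lee_fin.
set c := (2 * gam)^-1.
have c0 : 0 < c by rewrite invr_gt0 mulr_gt0.
set N := `|w - p| ^+ 2.
set X := gw - (gp + gam^-1 * ip (zb - p) (w - p)).
have key t : 0 < t <= 1 -> - (t * (c * N)) <= X.
  move=> /andP [t0 t1].
  suff h : 0 <= t * (X + t * (c * N)) by move: h; rewrite pmulr_rge0 // => h; lra.
  have hc := Hcv w p (t:=t); rewrite ltW //= t1 in hc.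
  have hc' := hc isT; rewrite gwE hgp in hc'.
  have := hp (t *: w + (1 - t) *: p).
  have [gt hgt] := fin_of_le (hninf _) hc'.
  rewrite hgt in hc'; rewrite hgt hgp -!EFinD lee_fin => hpt.
  move: hc'; rewrite -!EFinM -EFinD lee_fin => hc'.
  move: hpt; rewrite comb_sub !(nip hip) /N !(nip hip).
  rewrite !(ipDl hip, ipDr hip, ipZl hip, ipZr hip, ipBl hip, ipBr hip, ipNl hip, ipNr hip).
  rewrite ?(ipC hip p zb) ?(ipC hip w zb) ?(ipC hip p w) => hpt.
  have e2 : gam^-1 = 2 * c by rewrite /c; field; rewrite gt_eqF.
  rewrite /X e2.
  rewrite !(ipDl hip, ipDr hip, ipZl hip, ipZr hip, ipBl hip, ipBr hip, ipNl hip, ipNr hip).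
  rewrite ?(ipC hip p zb) ?(ipC hip w zb) ?(ipC hip p w).
  rewrite -/c in hpt; lra.
rewrite -subr_ge0 -/X.
apply: (@ge0_eps _ X (c * N)); first by apply: mulr_ge0; [exact: ltW|exact: sqr_ge0].
move=> eps e0.
pose t := Num.min 1 eps.
have t0 : 0 < t by rewrite /t lt_min ltr01 e0.
have t1 : t <= 1 by rewrite /t ge_min lexx.
have te : t <= eps by rewrite /t ge_min lexx orbT.
apply: le_trans (key t _); last by rewrite t0 t1.
by rewrite lerN2 ler_wpM2r //; apply: mulr_ge0; [exact: ltW|exact: sqr_ge0].
Qed.
End Prox.
Section Opt.
Variables (R : realType) (V : completeNormedModType R) (ip : V -> V -> R).
Hypothesis hip : is_inner_product ip.
Variable g : V -> \bar R.
Hypothesis Hcv : convex_efun g.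
Hypothesis Hpr : proper_efun g.
Variables (f : V -> R) (grad : V -> V) (L : R).
Hypothesis Hup : forall a b, f a <= f b + ip (grad b) (a - b) + L / 2 * `|a - b| ^+ 2.
Hypothesis L0 : 0 <= L.

Lemma opt_cond xs : is_minimizer f g xs ->
  exists gs : R, g xs = gs%:E /\
    forall w, ((gs - ip (grad xs) (w - xs))%:E <= g w)%E.
Proof.
move=> hm.
case: Hpr => [[w0 hw0] hninf].
have [gs hgs] : exists gs, g xs = gs%:E.
  have h1 := hm w0; have h2 := hninf xs.
  move: h1 h2; case: (g xs) => [r| |] // h1 _; first by exists r.
  by exfalso; move: h1 hw0; case: (g w0) => [r0| |] //=.
exists gs; split => // w.
move gwE : (g w) => [gw| |]; last by have := hninf w; rewrite gwE.
  2: by rewrite leey.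
rewrite lee_fin.
set N := `|w - xs| ^+ 2.
have N0 : 0 <= N by exact: sqr_ge0.
set X := gw - (gs - ip (grad xs) (w - xs)).
have key t : 0 < t <= 1 -> - (t * (L / 2 * N)) <= X.
  move=> /andP [t0 t1].
  suff h : 0 <= t * (X + t * (L / 2 * N)) by move: h; rewrite pmulr_rge0 // => h; lra.
  have hc := Hcv w xs (t:=t); rewrite ltW //= t1 in hc.
  have hc' := hc isT; rewrite gwE hgs in hc'.
  have [gt hgt] := fin_of_le (hninf _) hc'.
  rewrite hgt in hc'; move: hc'; rewrite -!EFinM -EFinD lee_fin => hc'.
  have := hm (t *: w + (1 - t) *: xs); rewrite hgt hgs -!EFinD lee_fin => hmt.
  have hu := Hup (t *: w + (1 - t) *: xs) xs.
  rewrite comb_sub2 (ipZr hip) normrZ gtr0_norm // exprMn -/N in hu.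
  rewrite /X; set G := ip _ _ in hu *; lra.
rewrite -subr_ge0 -/X.
apply: (@ge0_eps _ X (L / 2 * N)); first by rewrite mulr_ge0 // divr_ge0.
move=> eps e0.
pose t := Num.min 1 eps.
have t0 : 0 < t by rewrite /t lt_min ltr01 e0.
have t1 : t <= 1 by rewrite /t ge_min lexx.
have te : t <= eps by rewrite /t ge_min lexx orbT.
apply: le_trans (key t _); last by rewrite t0 t1.
by rewrite lerN2 ler_wpM2r // mulr_ge0 // divr_ge0.
Qed.
End Opt.
Definition Vf (R : realType) (V : completeNormedModType R) (ip : V -> V -> R)
  (s L : R) (Z Vv P Gp : V) (phip psiz : R) : R :=
  ip Z Z + ip Z Vv / L + ip Vv Vv / (2 * s ^+ 2 * L ^+ 2)
  + (1 - s ^+ 2) / (s ^+ 2 * L) * phip - ip Gp Gp / (2 * s ^+ 2 * L ^+ 2)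
  - psiz / (s * L).

Section Step.
Variables (R : realType) (V : completeNormedModType R) (ip : V -> V -> R).
Hypothesis hip : is_inner_product ip.

Lemma lyap_step (s L : R) (Z P Gp Vv E Vp Y Z1 : V) (phip phiy psiz psiz1 : R) :
  0 < s -> s < 1 -> 0 < L ->
  Y = (2 * s / (1 + s)) *: Z + ((1 - s) / (1 + s)) *: ((1 - s ^+ 2) *: P - L^-1 *: (Gp + Vv)) ->
  Z1 = (1 - s) *: Z - (s * L)^-1 *: (E + Vp) ->
  phiy + ip E (- Y) + (2 * (L * (1 - s ^+ 2)))^-1 * ip E E <= 0 ->
  phiy + ip E (P - Y) + (2 * (L * (1 - s ^+ 2)))^-1 * ip (Gp - E) (Gp - E) <= phip ->
  psiz1 + ip Vp (- Z1) <= 0 ->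
  0 <= psiz1 ->
  psiz + ip Vv (Z1 - Z) <= psiz1 ->
  Vf ip s L Z1 Vp Y E phiy psiz1 <= (1 - s) ^+ 2 * Vf ip s L Z Vv P Gp phip psiz.
Proof.
move=> s0 s1 L0 -> -> Ha Hc He0 Hzp0 Hzpz.
have hsq1 := ipxx_ge0 hip (Vp - (1 - s) ^+ 2 *: Vv).
have hsq2 := ipxx_ge0 hip Vv.
rewrite /Vf.
rewrite ?(ipDl hip, ipDr hip, ipZl hip, ipZr hip, ipBl hip, ipBr hip, ipNl hip, ipNr hip)
  in Ha Hc He0 Hzpz hsq1 hsq2 *.
rewrite ?(ipC hip P Z) ?(ipC hip Gp Z) ?(ipC hip Vv Z) ?(ipC hip E Z) ?(ipC hip Vp Z)
  ?(ipC hip Gp P) ?(ipC hip Vv P) ?(ipC hip E P) ?(ipC hip Vp P)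
  ?(ipC hip Vv Gp) ?(ipC hip E Gp) ?(ipC hip Vp Gp)
  ?(ipC hip E Vv) ?(ipC hip Vp Vv) ?(ipC hip Vp E) in Ha Hc He0 Hzpz hsq1 hsq2 *.
rewrite -subr_ge0 in Ha; rewrite -subr_ge0 in Hc; rewrite -subr_ge0 in He0.
rewrite -subr_ge0 in Hzpz.
set a := (1 - s ^+ 2) / s ^+ 2.
set r2 := (1 - s) ^+ 2.
have r20 : 0 <= r2 by exact: sqr_ge0.
have r21 : r2 <= 1 by rewrite /r2 expr2; nra.
have a0 : 0 <= a by rewrite /a divr_ge0 ?sqr_ge0 // expr2; nra.
have l1 : 0 <= a * (1 - r2) / L.
  by apply: divr_ge0 (ltW L0); apply: mulr_ge0 a0 _; rewrite subr_ge0.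
have l2 : 0 <= a * r2 / L by apply: divr_ge0 (ltW L0); apply: mulr_ge0.
have l3 : 0 <= (2 / s - 1) / L.
  apply: divr_ge0 (ltW L0); rewrite subr_ge0 ler_pdivlMr // mul1r; lra.
have l4 : 0 <= (2 / s + 1 - s) / L.
  apply: divr_ge0 (ltW L0); have : 0 <= 2 / s by rewrite divr_ge0 ?ltW.
  lra.
have l5 : 0 <= r2 / s / L by apply: divr_ge0 (ltW L0); apply: divr_ge0 r20 (ltW s0).
have l6 : 0 <= (2 * s ^+ 2 * L ^+ 2)^-1.
  by rewrite invr_ge0; apply: mulr_ge0; [apply: mulr_ge0|]; rewrite ?sqr_ge0.
have l7 : 0 <= r2 * (1 - r2) by apply: mulr_ge0 r20 _; rewrite subr_ge0.
have H := addr_ge0 (addr_ge0 (addr_ge0 (addr_ge0 (addr_ge0 (mulr_ge0 l1 Ha) (mulr_ge0 l2 Hc))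
  (mulr_ge0 l3 He0)) (mulr_ge0 l4 Hzp0)) (mulr_ge0 l5 Hzpz))
  (mulr_ge0 l6 (addr_ge0 hsq1 (mulr_ge0 l7 hsq2))).
rewrite -subr_ge0; apply: (le_trans H); rewrite le_eqVlt; apply/orP; left; apply/eqP.
rewrite /a /r2.
field.
have h1 : 1 - s ^+ 2 != 0 by apply/eqP => h; nra.
have h2 : 1 + s != 0 by apply/eqP => h; nra.
by rewrite h1 h2 !gt_eqF.
Qed.
End Step.
Section Conv.
Variables (R : realType) (V : completeNormedModType R) (ip : V -> V -> R).
Hypothesis hip : is_inner_product ip.

Definition phiF (f : V -> R) (mu : R) (xs gs : V) (x : V) : R :=
  f x - f xs - ip gs (x - xs) - mu / 2 * ip (x - xs) (x - xs).
Definition gphi (grad : V -> V) (mu : R) (xs : V) (x : V) : V :=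
  grad x - grad xs - mu *: (x - xs).

Ltac ipexp := rewrite ?(ipDl hip, ipDr hip, ipZl hip, ipZr hip, ipBl hip, ipBr hip, ipNl hip, ipNr hip).

Lemma conv_f (f : V -> R) (grad : V -> V) (s L mu : R) (a b xs : V) :
  0 < s -> s < 1 -> 0 < L -> mu = s ^+ 2 * L ->
  f b + ip (grad b) (a - b)
  + (2 * (L - mu))^-1 * `|grad a - grad b - mu *: (a - b)| ^+ 2
  + mu / 2 * `|a - b| ^+ 2 <= f a ->
  phiF f mu xs (grad xs) b + ip (gphi grad mu xs b) ((a - xs) - (b - xs))
  + (2 * (L * (1 - s ^+ 2)))^-1 * ip (gphi grad mu xs a - gphi grad mu xs b) (gphi grad mu xs a - gphi grad mu xs b)
  <= phiF f mu xs (grad xs) a.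
Proof.
move=> s0 s1 L0 hmu H.
have h1 : 1 - s ^+ 2 != 0 by apply/eqP => h; nra.
rewrite /phiF /gphi.
rewrite !(nip hip) in H.
move: (grad a) (grad b) (grad xs) H => ga gb gs H.
rewrite hmu in H *.
ipexp; move: H; ipexp => H.
rewrite ?(ipC hip b a) ?(ipC hip xs a) ?(ipC hip ga a) ?(ipC hip gb a) ?(ipC hip gs a)
  ?(ipC hip xs b) ?(ipC hip ga b) ?(ipC hip gb b) ?(ipC hip gs b)
  ?(ipC hip ga xs) ?(ipC hip gb xs) ?(ipC hip gs xs)
  ?(ipC hip gb ga) ?(ipC hip gs ga) ?(ipC hip gs gb) in H *.
rewrite -subr_ge0 in H; rewrite -subr_ge0; apply: (le_trans H).
rewrite le_eqVlt; apply/orP; left; apply/eqP.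
field.
have h2 : L - s ^+ 2 * L != 0.
  by rewrite -{1}(mul1r L) -mulrBl mulf_neq0 // gt_eqF.
by rewrite h1 h2 gt_eqF.
Qed.

Lemma conv_f_xs (f : V -> R) (grad : V -> V) (s L mu : R) (a xs : V) :
  0 < s -> s < 1 -> 0 < L -> mu = s ^+ 2 * L ->
  f a + ip (grad a) (xs - a)
  + (2 * (L - mu))^-1 * `|grad xs - grad a - mu *: (xs - a)| ^+ 2
  + mu / 2 * `|xs - a| ^+ 2 <= f xs ->
  phiF f mu xs (grad xs) a + ip (gphi grad mu xs a) (- (a - xs))
  + (2 * (L * (1 - s ^+ 2)))^-1 * ip (gphi grad mu xs a) (gphi grad mu xs a) <= 0.
Proof.
move=> s0 s1 L0 hmu H.
have h1 : 1 - s ^+ 2 != 0 by apply/eqP => h; nra.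
have h2 : L - s ^+ 2 * L != 0.
  by rewrite -{1}(mul1r L) -mulrBl mulf_neq0 // gt_eqF.
rewrite /phiF /gphi.
rewrite !(nip hip) in H.
move: (grad a) (grad xs) H => ga gs H.
rewrite hmu in H *.
ipexp; move: H; ipexp => H.
rewrite ?(ipC hip xs a) ?(ipC hip ga a) ?(ipC hip gs a)
  ?(ipC hip ga xs) ?(ipC hip gs xs) ?(ipC hip gs ga) in H *.
rewrite -subr_ge0 in H; rewrite -subr_ge0; apply: (le_trans H).
rewrite le_eqVlt; apply/orP; left; apply/eqP.
field.
by rewrite ?h1 ?h2 ?gt_eqF.
Qed.

Lemma conv_lb (f : V -> R) (grad : V -> V) (s L mu : R) (a xs : V) :
  0 < s -> s < 1 -> 0 < L -> mu = s ^+ 2 * L ->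
  f xs + ip (grad xs) (a - xs)
  + (2 * (L - mu))^-1 * `|grad a - grad xs - mu *: (a - xs)| ^+ 2
  + mu / 2 * `|a - xs| ^+ 2 <= f a ->
  (2 * (L * (1 - s ^+ 2)))^-1 * ip (gphi grad mu xs a) (gphi grad mu xs a)
  <= phiF f mu xs (grad xs) a.
Proof.
move=> s0 s1 L0 hmu H.
have h1 : 1 - s ^+ 2 != 0 by apply/eqP => h; nra.
have h2 : L - s ^+ 2 * L != 0.
  by rewrite -{1}(mul1r L) -mulrBl mulf_neq0 // gt_eqF.
rewrite /phiF /gphi.
rewrite !(nip hip) in H.
move: (grad a) (grad xs) H => ga gs H.
rewrite hmu in H *.
ipexp; move: H; ipexp => H.
rewrite ?(ipC hip xs a) ?(ipC hip ga a) ?(ipC hip gs a)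
  ?(ipC hip ga xs) ?(ipC hip gs xs) ?(ipC hip gs ga) in H *.
rewrite -subr_ge0 in H; rewrite -subr_ge0; apply: (le_trans H).
rewrite le_eqVlt; apply/orP; left; apply/eqP.
field.
by rewrite ?h1 ?h2 ?gt_eqF.
Qed.

Definition psiF (gsv : R) (xs gs : V) (gx : R) (x : V) : R := gx - gsv + ip gs (x - xs).

Lemma conv_g (c gsv gz gw : R) (z zb w xs gs : V) :
  gz + c * ip (zb - z) (w - z) <= gw ->
  psiF gsv xs gs gz z + ip (c *: (zb - z) + gs) ((w - xs) - (z - xs)) <= psiF gsv xs gs gw w.
Proof.
move=> H; rewrite /psiF; move: H.
ipexp => H; ipexp.
rewrite ?(ipC hip z zb) ?(ipC hip w zb) ?(ipC hip xs zb) ?(ipC hip w z) ?(ipC hip xs z) ?(ipC hip xs w) in H *.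
lra.
Qed.

Lemma conv_g_xs (c gsv gz : R) (z zb xs gs : V) :
  gz + c * ip (zb - z) (xs - z) <= gsv ->
  psiF gsv xs gs gz z + ip (c *: (zb - z) + gs) (- (z - xs)) <= 0.
Proof.
move=> H; rewrite /psiF; move: H.
ipexp => H; ipexp.
rewrite ?(ipC hip z zb) ?(ipC hip xs zb) ?(ipC hip xs z) in H *.
lra.
Qed.

Lemma lyap_lb (s L : R) (Z P Gp Vv : V) (phip psiz : R) :
  0 < s -> s < 1 -> 0 < L ->
  (2 * (L * (1 - s ^+ 2)))^-1 * ip Gp Gp <= phip ->
  psiz + ip Vv (- Z) <= 0 ->
  ip Z Z / 2 <= Vf ip s L Z Vv P Gp phip psiz.
Proof.
move=> s0 s1 L0 Hb Hz.
have h1 : 1 - s ^+ 2 != 0 by apply/eqP => h; nra.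
have hsq1 := ipxx_ge0 hip (Z - ((1 - s) / (s * L)) *: Vv).
have hsq2 := ipxx_ge0 hip Vv.
rewrite /Vf.
move: hsq1; ipexp => hsq1.
move: Hz; ipexp => Hz.
rewrite ?(ipC hip Vv Z) in hsq1 Hz *.
rewrite -subr_ge0 in Hb; rewrite -subr_ge0 in Hz.
have l1 : 0 <= (1 - s ^+ 2) / (s ^+ 2 * L).
  apply: divr_ge0; first by rewrite expr2; nra.
  by apply: mulr_ge0; rewrite ?sqr_ge0 ?ltW.
have l2 : 0 <= (s * L)^-1 by rewrite invr_ge0 mulr_ge0 ?ltW.
have l3 : 0 <= (1 - (1 - s) ^+ 2) / (2 * s ^+ 2 * L ^+ 2).
  apply: divr_ge0; first by rewrite expr2; nra.
  by apply: mulr_ge0; [apply: mulr_ge0|]; rewrite ?sqr_ge0.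
have l0 : 0 <= (2 : R)^-1 by rewrite invr_ge0.
have H := addr_ge0 (addr_ge0 (addr_ge0 (mulr_ge0 l1 Hb) (mulr_ge0 l2 Hz))
  (mulr_ge0 l0 hsq1)) (mulr_ge0 l3 hsq2).
rewrite -subr_ge0; apply: (le_trans H); rewrite le_eqVlt; apply/orP; left; apply/eqP.
field.
by rewrite h1 !gt_eqF.
Qed.
End Conv.
Section VId.
Variables (R : realType) (V : completeNormedModType R) (ip : V -> V -> R).
Hypothesis hip : is_inner_product ip.
Lemma vec_eq (u w : V) : (forall X, ip (u - w) X = 0) -> u = w.
Proof.
move=> /(_ (u - w)).
by rewrite -(nip hip) => /eqP; rewrite expf_eq0 /= normr_eq0 subr_eq0 => /eqP.
Qed.

Lemma id_y (s L mu : R) (z1 yp gyp zb1 xs gs : V) :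
  0 < s -> 0 < L -> mu = s ^+ 2 * L ->
  ((2 * s / (1 + s)) *: z1 + ((1 - s) / (1 + s)) *: (yp - L^-1 *: gyp - s *: (zb1 - z1))) - xs
  = (2 * s / (1 + s)) *: (z1 - xs) + ((1 - s) / (1 + s)) *:
      ((1 - s ^+ 2) *: (yp - xs) - L^-1 *: ((gyp - gs - mu *: (yp - xs)) + ((s * L) *: (zb1 - z1) + gs))).
Proof.
move=> s0 L0 hmu; apply: vec_eq => X; rewrite hmu.
rewrite ?(ipDl hip, ipZl hip, ipBl hip, ipNl hip).
field.
have h2 : 1 + s != 0 by apply/eqP => h; lra.
by rewrite h2 !gt_eqF.
Qed.

Lemma id_z (s L mu : R) (z2 z1 y1 gy1 xs gs : V) :
  0 < s -> 0 < L -> mu = s ^+ 2 * L ->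
  z2 - xs = (1 - s) *: (z1 - xs) - (s * L)^-1 *:
    ((gy1 - gs - mu *: (y1 - xs)) +
     ((s * L) *: (((1 - s) *: z1 + s *: y1 - (s * L)^-1 *: gy1) - z2) + gs)).
Proof.
move=> s0 L0 hmu; apply: vec_eq => X; rewrite hmu.
rewrite ?(ipDl hip, ipZl hip, ipBl hip, ipNl hip).
field.
by rewrite !gt_eqF.
Qed.

Lemma fin_bound (a r D : R) : 0 <= a -> 0 < r -> 0 <= D -> a ^+ 2 <= D * r ^+ 2 ->
  a <= (1 + D) * r.
Proof.
move=> a0 r0 D0 h.
rewrite leNgt; apply/negP => h2.
have h3 : r < a by nra.
have : a * r < a * a by rewrite ltr_pM2l ?(lt_trans r0 h3).
nra.
Qed.
End VId.
Theorem theorem3 (R : realType) (V : completeNormedModType R)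
  (ip : V -> V -> R) (f : V -> R) (grad : V -> V) (g : V -> \bar R)
  (mu L : R) (x y z zbar : nat -> V) (xstar : V) :
  is_inner_product ip ->
  0 < mu -> mu < L ->
  strongly_convex mu f ->
  L_smooth ip L f grad ->
  convex_efun g -> proper_efun g -> lower_semicontinuous g ->
  prox_TMM mu L grad g x y z zbar ->
  is_minimizer f g xstar ->
  exists (C : R) (N : nat), forall k : nat, (N <= k)%N ->
    `|z k - xstar| <= C * (1 - Num.sqrt (mu / L)) ^+ k.
Proof.
move=> hip mu0 muL Hsc [Hg HL] Hcv Hpr _ [hz0 Halg] Hmin.
set xs := xstar.
set s := Num.sqrt (mu / L).
have L0 : 0 < L := lt_trans mu0 muL.
have q0 : 0 < mu / L by rewrite divr_gt0.
have q1 : mu / L < 1 by rewrite ltr_pdivrMr // mul1r.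
have s0 : 0 < s by rewrite /s sqrtr_gt0.
have s2 : s ^+ 2 = mu / L by rewrite /s sqr_sqrtr // ltW.
have s1 : s < 1 by rewrite expr2 in s2; nra.
have hmu : mu = s ^+ 2 * L by rewrite s2 mulfVK // gt_eqF.
have Hlowmu := sc_lower hip Hg Hsc (ltW mu0).
have Hlow : forall a b, f b + ip (grad b) (a - b) <= f a.
  move=> a b; apply: le_trans (Hlowmu a b); rewrite lerDl mulr_ge0 ?sqr_ge0 //.
  by rewrite divr_ge0 // ltW.
have Hup := smooth_upper hip Hlow HL (ltW L0).
have Hint := interp hip Hlowmu Hup muL.
have [gsv [hgs Hopt]] := opt_cond hip Hcv Hpr Hup (ltW L0) Hmin.
have sL0 : 0 < s * L by rewrite mulr_gt0.
have Hsub n : exists gk, g (z n.+1) = gk%:E /\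
    forall w, ((gk + (s * L) * ip (zbar n.+1 - z n.+1) (w - z n.+1))%:E <= g w)%E.
  have [_ _ hp _] := Halg n.
  have gam0 : 0 < (s * L)^-1 by rewrite invr_gt0.
  have := prox_subgrad hip Hcv Hpr gam0 hp.
  by rewrite invrK.
pose gval n := fine (g (z n)).
have HS n w gw : g w = gw%:E ->
    gval n.+1 + (s * L) * ip (zbar n.+1 - z n.+1) (w - z n.+1) <= gw.
  move=> hw; have [gk [hgk H]] := Hsub n.
  have := H w; rewrite hw lee_fin /gval hgk /=.
  done.
have Hgv n : g (z n.+1) = (gval n.+1)%:E.
  by have [gk [hgk _]] := Hsub n; rewrite /gval hgk.
set gsF := grad xs.
pose W n := Vf ip s L (z n.+1 - xs) ((s * L) *: (zbar n.+1 - z n.+1) + gsF)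
  (y n - xs) (gphi grad mu xs (y n)) (phiF ip f mu xs gsF (y n))
  (psiF ip gsv xs gsF (gval n.+1) (z n.+1)).
have Wlb n : ip (z n.+1 - xs) (z n.+1 - xs) / 2 <= W n.
  rewrite /W; apply: (lyap_lb hip) => //.
    exact: (conv_lb hip s0 s1 L0 hmu (Hint (y n) xs)).
  by apply: (conv_g_xs hip); exact: (HS n xs gsv hgs).
have Wstep n : W n.+1 <= (1 - s) ^+ 2 * W n.
  rewrite /W; apply: (lyap_step hip) => //.
  - have [hy _ _ _] := Halg n.+1; have [_ _ _ hx] := Halg n.
    rewrite hy hx /gphi -/s /gsF; exact: (id_y hip _ _ _ _ _ _ s0 L0 hmu).
  - have [_ hzb _ _] := Halg n.+1.
    rewrite hzb /gphi -/s /gsF; exact: (id_z hip _ _ _ _ _ _ s0 L0 hmu).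
  - exact: (conv_f_xs hip s0 s1 L0 hmu (Hint xs (y n.+1))).
  - exact: (conv_f hip xs s0 s1 L0 hmu (Hint (y n) (y n.+1))).
  - by apply: (conv_g_xs hip); exact: (HS n.+1 xs gsv hgs).
  - have := Hopt (z n.+2); rewrite Hgv lee_fin /psiF => h; lra.
  - by apply: (conv_g hip); exact: (HS n (z n.+2) _ (Hgv n.+1)).
set r2 := (1 - s) ^+ 2.
have r20 : 0 <= r2 by exact: sqr_ge0.
have Wind n : W n <= r2 ^+ n * W 0.
  elim: n => [|n IH]; first by rewrite expr0 mul1r.
  apply: le_trans (Wstep n) _.
  by rewrite -/r2 [r2 ^+ n.+1]exprS -mulrA; apply: ler_wpM2l.
have W00 : 0 <= W 0.
  by apply: le_trans (Wlb 0); rewrite divr_ge0 // ipxx_ge0.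
have r2p : 0 < r2 by rewrite /r2 exprn_gt0 // subr_gt0.
exists (1 + 2 * W 0 / r2), 1%N => k.
case: k => [|n] // _.
have rp : 0 < (1 - s) ^+ n.+1 by rewrite exprn_gt0 // subr_gt0.
apply: fin_bound.
- exact: normr_ge0.
- exact: rp.
- by apply: divr_ge0 (ltW r2p); apply: mulr_ge0.
rewrite (nip hip).
have h1 := Wlb n; have h2 := Wind n.
have -> : 2 * W 0 / r2 * ((1 - s) ^+ n.+1) ^+ 2 = 2 * (r2 ^+ n * W 0).
  rewrite -exprM mulnC exprM -/r2 exprS.
  by field; rewrite gt_eqF.
lra.
Qed.
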